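(* Let $\mathcal{IB}$ be the strict monoidal category whose objects are $\overline 0,\overline 1,\overline 2,\dots$, with $\operatorname{hom}(\overline k,\overline l)=IB_k$ if $k=l$ and empty otherwise, tensor product given on objects by $\overline k\otimes\overline l=\overline{k+l}$ and on morphisms by the pairing $\mu:IB_k\times IB_l\to IB_{k+l}$. For $m,n\ge0$ let $c_{\overline m,\overline n}\in Br_{m+n}\subset IB_{m+n}$ be $$c_{\overline m,\overline n}=\sigma_m\cdots\sigma_1\,\sigma_{m+1}\cdots\sigma_2\cdots\sigma_{n+m-1}\cdots\sigma_n .$$ Then $c$ is a braiding on $\mathcal{IB}$, so $\mathcal{IB}$ is a braided monoidal category, and the functor $\mathcal K:\mathcal B\to\mathcal{IB}$ induced by the inclusions $\kappa_n:Br_n\to IB_n$ is a morphism of braided monoidal categories.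
   Context: $IB_n$ is the inverse braid monoid of partial braids on $n$ strings (braids with some strings deleted, up to isotopy, multiplied by stacking and removing arcs not joining top and bottom), containing $Br_n$ with Artin generators $\sigma_i$; $\epsilon_i$ denotes the trivial braid with $i$-th string deleted. The pairing $\mu:IB_k\times IB_l\to IB_{k+l}$ places the partial braids side by side: $\mu(\sigma_i',e)=\sigma_i$, $\mu(e,\sigma_j'')=\sigma_{j+k}$, $\mu(\epsilon_i',e)=\epsilon_i$, $\mu(e,\epsilon_j'')=\epsilon_{j+k}$, where primes denote generators of $IB_k$ and $IB_l$. $\mathcal B$ is the analogous strict monoidal category with $\operatorname{hom}(\overline k,\overline k)=Br_k$, which is braided (in the sense of Joyal–Street) by the same elements $c_{\overline m,\overline n}$. $\kappa_n:Br_n\to IB_n$ is the canonical inclusion. *)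

(* Defs.v *)
(* Braid groups Br_n and inverse braid monoids
   IB_n are given by their standard presentations (Artin; Easdown--Lavers),
   elements being words modulo the congruence generated by the relations.
   Convention: the word  x ++ y  is the stacked partial braid "x first, then y";
   in the category, the word  x ++ y  represents the composite  y \o x. *)
From mathcomp Require Import all_boot.
Set Implicit Arguments. Unset Strict Implicit. Unset Printing Implicit Defensive.

(* BS i = sigma_i, BSi i = sigma_i^{-1}  (1 <= i <= n-1) *)
Inductive bletter := BS of nat | BSi of nat.

Definition bvalid (n : nat) (l : bletter) : bool :=
  match l with BS i | BSi i => (0 < i < n) end.

Inductive brel (n : nat) : seq bletter -> seq bletter -> Prop :=
| b_inv1 i : 0 < i < n -> brel n [:: BS i; BSi i] [::]
| b_inv2 i : 0 < i < n -> brel n [:: BSi i; BS i] [::]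
| b_far i j : 0 < i -> j < n -> i.+1 < j -> brel n [:: BS i; BS j] [:: BS j; BS i]
| b_braid i : 0 < i -> i.+1 < n ->
    brel n [:: BS i; BS i.+1; BS i] [:: BS i.+1; BS i; BS i.+1].

Inductive breq (n : nat) : seq bletter -> seq bletter -> Prop :=
| breq_step u v x y : brel n x y -> breq n (u ++ x ++ v) (u ++ y ++ v)
| breq_refl w : breq n w w
| breq_sym w w' : breq n w w' -> breq n w' w
| breq_trans w1 w2 w3 : breq n w1 w2 -> breq n w2 w3 -> breq n w1 w3.

(* IS i = sigma_i, ISi i = sigma_i^{-1}, IE = epsilon_1 (first string deleted) *)
Inductive IBletter := IS of nat | ISi of nat | IE.

Definition ivalid (n : nat) (l : IBletter) : bool :=
  match l with IS i | ISi i => (0 < i < n) | IE => 0 < n end.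

Inductive ibrel (n : nat) : seq IBletter -> seq IBletter -> Prop :=
| ib_inv1 i : 0 < i < n -> ibrel n [:: IS i; ISi i] [::]
| ib_inv2 i : 0 < i < n -> ibrel n [:: ISi i; IS i] [::]
| ib_far i j : 0 < i -> j < n -> i.+1 < j -> ibrel n [:: IS i; IS j] [:: IS j; IS i]
| ib_braid i : 0 < i -> i.+1 < n ->
    ibrel n [:: IS i; IS i.+1; IS i] [:: IS i.+1; IS i; IS i.+1]
| ib_epscomm i : 1 < i < n -> ibrel n [:: IE; IS i] [:: IS i; IE]
| ib_epsidem : 0 < n -> ibrel n [:: IE; IE] [:: IE]
| ib_epssq1 : 1 < n -> ibrel n [:: IE; IS 1; IS 1] [:: IE]
| ib_epssq2 : 1 < n -> ibrel n [:: IS 1; IS 1; IE] [:: IE]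
| ib_eps1 : 1 < n -> ibrel n [:: IE; IS 1; IE; IS 1] [:: IE; IS 1; IE]
| ib_eps2 : 1 < n -> ibrel n [:: IS 1; IE; IS 1; IE] [:: IE; IS 1; IE].

Inductive ibeq (n : nat) : seq IBletter -> seq IBletter -> Prop :=
| ibeq_step u v x y : ibrel n x y -> ibeq n (u ++ x ++ v) (u ++ y ++ v)
| ibeq_refl w : ibeq n w w
| ibeq_sym w w' : ibeq n w w' -> ibeq n w' w
| ibeq_trans w1 w2 w3 : ibeq n w1 w2 -> ibeq n w2 w3 -> ibeq n w1 w3.

(* epsilon_i (i-th string deleted), i >= 1:
   sigma_{i-1}^{-1} ... sigma_1^{-1} epsilon_1 sigma_1 ... sigma_{i-1} *)
Definition epsw (i : nat) : seq IBletter :=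
  [seq ISi j | j <- rev (iota 1 i.-1)] ++ IE :: [seq IS j | j <- iota 1 i.-1].

Definition shiftI (k : nat) (l : IBletter) : seq IBletter :=
  match l with
  | IS i => [:: IS (i + k)]
  | ISi i => [:: ISi (i + k)]
  | IE => epsw (1 + k)
  end.

Definition muI (k l : nat) (f g : seq IBletter) : seq IBletter :=
  f ++ flatten (map (shiftI k) g).

Definition shiftB (k : nat) (l : bletter) : bletter :=
  match l with BS i => BS (i + k) | BSi i => BSi (i + k) end.

Definition muB (k l : nat) (f g : seq bletter) : seq bletter :=
  f ++ map (shiftB k) g.

Definition kappa_letter (l : bletter) : IBletter :=
  match l with BS i => IS i | BSi i => ISi i end.
Definition kappa (w : seq bletter) : seq IBletter := map kappa_letter w.

Definition cB (m n : nat) : seq bletter :=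
  flatten [seq [seq BS (j + i) | i <- rev (iota 0 m)] | j <- iota 1 n].
Definition cI (m n : nat) : seq IBletter :=
  flatten [seq [seq IS (j + i) | i <- rev (iota 0 m)] | j <- iota 1 n].

Definition IB_strict_monoidal : Prop :=
  [/\ (forall k l f f' g g', all (ivalid k) f -> all (ivalid k) f' ->
         all (ivalid l) g -> all (ivalid l) g' ->
         ibeq k f f' -> ibeq l g g' -> ibeq (k + l) (muI k l f g) (muI k l f' g')),
      (forall k l f g, all (ivalid k) f -> all (ivalid l) g ->
         all (ivalid (k + l)) (muI k l f g)),
      (forall k l f f' g g', all (ivalid k) f -> all (ivalid k) f' ->
         all (ivalid l) g -> all (ivalid l) g' ->
         ibeq (k + l) (muI k l (f ++ f') (g ++ g'))
                      (muI k l f g ++ muI k l f' g')),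
      (forall k l p f g h, all (ivalid k) f -> all (ivalid l) g -> all (ivalid p) h ->
         ibeq (k + l + p) (muI (k + l) p (muI k l f g) h) (muI k (l + p) f (muI l p g h)))
    & (forall k f, all (ivalid k) f ->
         ibeq k (muI 0 k [::] f) f /\ ibeq k (muI k 0 f [::]) f)].

Definition IB_braiding : Prop :=
  [/\ (forall m n, all (ivalid (m + n)) (cI m n)),
      (forall m n, exists d, all (ivalid (m + n)) d /\
         ibeq (m + n) (cI m n ++ d) [::] /\ ibeq (m + n) (d ++ cI m n) [::]),
      (* naturality: c \o (f (x) g) = (g (x) f) \o c *)
      (forall m n f g, all (ivalid m) f -> all (ivalid n) g ->
         ibeq (m + n) (muI m n f g ++ cI m n) (cI m n ++ muI n m g f)),
      (* hexagon 1: c_{X, Y(x)Z} = (id_Y (x) c_{X,Z}) \o (c_{X,Y} (x) id_Z) *)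
      (forall m n p, ibeq (m + n + p) (cI m (n + p))
         (muI (m + n) p (cI m n) [::] ++ muI n (m + p) [::] (cI m p)))
    & (* hexagon 2: c_{X(x)Y, Z} = (c_{X,Z} (x) id_Y) \o (id_X (x) c_{Y,Z}) *)
      (forall m n p, ibeq (m + n + p) (cI (m + n) p)
         (muI m (n + p) [::] (cI n p) ++ muI (m + p) n (cI m p) [::]))].

Definition K_braided_functor : Prop :=
  [/\ (forall n w, all (bvalid n) w -> all (ivalid n) (kappa w)),
      (forall n w w', all (bvalid n) w -> all (bvalid n) w' ->
         breq n w w' -> ibeq n (kappa w) (kappa w')),
      kappa [::] = [::] /\ (forall w w', kappa (w ++ w') = kappa w ++ kappa w'),
      (forall k l f g, all (bvalid k) f -> all (bvalid l) g ->
         ibeq (k + l) (kappa (muB k l f g)) (muI k l (kappa f) (kappa g)))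
    & (forall m n, ibeq (m + n) (kappa (cB m n)) (cI m n))].

(* Main.v *)
Require Import Defs.
From mathcomp Require Import all_boot.
From HB Require Import structures.
From Stdlib Require Import Setoid Morphisms.
From mathcomp Require Import zify.
Set Implicit Arguments. Unset Strict Implicit. Unset Printing Implicit Defensive.
Set Bullet Behavior "Strict Subproofs".

Definition lcode (l : IBletter) : nat * nat :=
  match l with IS i => (0, i) | ISi i => (1, i) | IE => (2, 0) end.
Definition ldecode (c : nat * nat) : IBletter :=
  match c with (0, i) => IS i | (1, i) => ISi i | _ => IE end.
Lemma lcodeK : cancel lcode ldecode. Proof. by case. Qed.
HB.instance Definition _ := Countable.copy IBletter (can_type lcodeK).
Set Warnings "-redundant-canonical-projection".

Lemma ibeq_ctx n a b u v : ibeq n a b -> ibeq n (u ++ a ++ v) (u ++ b ++ v).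
Proof.
elim=> [u' v' x y H| w | w w' _ IH | w1 w2 w3 _ IH1 _ IH2].
- have -> : u ++ (u' ++ x ++ v') ++ v = (u ++ u') ++ x ++ (v' ++ v) by rewrite !catA.
  have -> : u ++ (u' ++ y ++ v') ++ v = (u ++ u') ++ y ++ (v' ++ v) by rewrite !catA.
  exact: ibeq_step.
- exact: ibeq_refl.
- exact: ibeq_sym.
- exact: ibeq_trans IH2.
Qed.

Add Parametric Relation n : (seq IBletter) (ibeq n)
  reflexivity proved by (@ibeq_refl n)
  symmetry proved by (@ibeq_sym n)
  transitivity proved by (@ibeq_trans n) as ibeq_rel.

Add Parametric Morphism n : (@cat IBletter) with signature ibeq n ==> ibeq n ==> ibeq n as cat_mor.
Proof.
move=> a b Hab c d Hcd.
apply: (@ibeq_trans _ _ (b ++ c)).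
  by have := ibeq_ctx [::] c Hab; rewrite /= .
by have := ibeq_ctx b [::] Hcd; rewrite !cats0.
Qed.

Add Parametric Morphism n : (@cons IBletter) with signature eq ==> ibeq n ==> ibeq n as cons_mor.
Proof. move=> x a b H. by have := cat_mor (ibeq_refl n [:: x]) H. Qed.

#[export] Hint Resolve ibeq_refl : core.

Lemma rel_eq n x y : ibrel n x y -> ibeq n x y.
Proof. by move=> H; have := ibeq_step [::] [::] H; rewrite /= !cats0. Qed.

Lemma rel_eqr n x y r : ibrel n x y -> ibeq n (x ++ r) (y ++ r).
Proof. by move=> H; apply: cat_mor; [exact: rel_eq|reflexivity]. Qed.

Lemma ibrel_mono n n' x y : n <= n' -> ibrel n x y -> ibrel n' x y.
Proof.
move=> le; case.
- move=> i H; apply: ib_inv1; lia.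
- move=> i H; apply: ib_inv2; lia.
- move=> i j H1 H2 H3; apply: ib_far => //; lia.
- move=> i H1 H2; apply: ib_braid => //; lia.
- move=> i H; apply: ib_epscomm; lia.
- move=> H; apply: ib_epsidem; lia.
- move=> H; apply: ib_epssq1; lia.
- move=> H; apply: ib_epssq2; lia.
- move=> H; apply: ib_eps1; lia.
- move=> H; apply: ib_eps2; lia.
Qed.

Lemma ibeq_mono n n' x y : n <= n' -> ibeq n x y -> ibeq n' x y.
Proof.
move=> le; elim=> [u v a b H|w|w w' _ IH|w1 w2 w3 _ IH1 _ IH2].
- apply: ibeq_step; exact: ibrel_mono H.
- reflexivity.
- by symmetry.
- by rewrite IH1.
Qed.

Lemma inv1 n i r : 0 < i < n -> ibeq n (IS i :: ISi i :: r) r.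
Proof. by move=> H; have := rel_eqr r (ib_inv1 H). Qed.
Lemma inv2 n i r : 0 < i < n -> ibeq n (ISi i :: IS i :: r) r.
Proof. by move=> H; have := rel_eqr r (ib_inv2 H). Qed.

Lemma conj_inv n i i' X : 0 < i < n -> 0 < i' < n ->
  ibeq n (IS i :: X) (X ++ [:: IS i']) -> ibeq n (ISi i :: X) (X ++ [:: ISi i']).
Proof.
move=> Hi Hi' H.
have e1 : ibeq n (ISi i :: X) (ISi i :: X ++ [:: IS i'; ISi i']).
  by rewrite (inv1 [::] Hi') cats0.
rewrite e1.
have -> : ISi i :: X ++ [:: IS i'; ISi i'] = ISi i :: (X ++ [:: IS i']) ++ [:: ISi i'] by rewrite -catA.
by rewrite -H /= inv2.
Qed.

Lemma ISi_comm_IE n j : 1 < j < n -> ibeq n [:: IE; ISi j] [:: ISi j; IE].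
Proof.
move=> H; symmetry.
have := @conj_inv n j j [:: IE]; apply; try lia.
symmetry; exact: (rel_eq (ib_epscomm H)).
Qed.

Definition far i j := (i.+1 < j) || (j.+1 < i).

Lemma far_sym i j : far i j = far j i.
Proof. by rewrite /far orbC. Qed.

Definition lc (a b : IBletter) : bool :=
  match a, b with
  | IE, IE => true
  | IE, IS j | IE, ISi j => 1 < j
  | IS i, IE | ISi i, IE => 1 < i
  | IS i, IS j | IS i, ISi j | ISi i, IS j | ISi i, ISi j => far i j
  end.

Lemma ss_far n i j : 0 < i < n -> 0 < j < n -> far i j -> ibeq n [:: IS i; IS j] [:: IS j; IS i].
Proof.
move=> Hi Hj; case/orP=> H.
- apply: rel_eq; apply: ib_far; lia.
- symmetry; apply: rel_eq; apply: ib_far; lia.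
Qed.

Lemma lc_comm n a b : ivalid n a -> ivalid n b -> lc a b -> ibeq n [:: a; b] [:: b; a].
Proof.
case: a => [i|i|]; case: b => [j|j|] //= Hi Hj H.
- exact: ss_far.
- symmetry. apply: (@conj_inv n j j [:: IS i]) => //. symmetry. apply: ss_far => //; by rewrite far_sym.
- symmetry; apply: rel_eq; apply: ib_epscomm; lia.
- apply: (@conj_inv n i i [:: IS j]) => //. exact: ss_far.
- apply: (@conj_inv n i i [:: ISi j]) => //. symmetry. apply: (@conj_inv n j j [:: IS i]) => //.
  symmetry; apply: ss_far => //; by rewrite far_sym.
- symmetry; apply: ISi_comm_IE; lia.
- apply: rel_eq; apply: ib_epscomm; lia.
- apply: ISi_comm_IE; lia.
Qed.

Lemma wcomm1 n a v : ivalid n a -> all (ivalid n) v -> all (lc a) v -> ibeq n (a :: v) (v ++ [:: a]).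
Proof.
move=> Ha; elim: v => [|b v IH] //= /andP[Hb Hv] /andP[Hab Habs].
have -> : a :: b :: v = [:: a; b] ++ v by [].
rewrite (lc_comm Ha Hb Hab) /=. by rewrite IH.
Qed.

Lemma wcomm n u v : all (ivalid n) u -> all (ivalid n) v ->
  all (fun a => all (lc a) v) u -> ibeq n (u ++ v) (v ++ u).
Proof.
move=> + Hv; elim: u => [|a u IH] /=; first by rewrite cats0.
move=> /andP[Ha Hu] /andP[Hav Huv].
rewrite IH //.
have -> : a :: v ++ u = (a :: v) ++ u by [].
by rewrite (wcomm1 Ha Hv Hav) -catA.
Qed.

Lemma braid_eq n i r : 0 < i -> i.+1 < n ->
  ibeq n (IS i :: IS i.+1 :: IS i :: r) (IS i.+1 :: IS i :: IS i.+1 :: r).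
Proof. by move=> H1 H2; have := rel_eqr r (ib_braid H1 H2). Qed.

Lemma wcomm_r n u v r : all (ivalid n) u -> all (ivalid n) v ->
  all (fun a => all (lc a) v) u -> ibeq n (u ++ v ++ r) (v ++ u ++ r).
Proof. by move=> *; rewrite !catA (wcomm (u:=u) (v:=v)). Qed.

Definition pr lo hi (a : IBletter) :=
  match a with IS i | ISi i => lo <= i <= hi | IE => false end.

Lemma comm_pr n u v lo1 hi1 lo2 hi2 : 0 < lo1 -> hi1 < n -> hi2 < n -> hi1.+1 < lo2 ->
  all (pr lo1 hi1) u -> all (pr lo2 hi2) v -> ibeq n (u ++ v) (v ++ u).
Proof.
move=> h1 h2 h3 h4 Hu Hv; apply: wcomm.
- apply/allP=> a /(allP Hu); case: a => //= i; lia.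
- apply/allP=> a /(allP Hv); case: a => //= i; lia.
- apply/allP=> a /(allP Hu) Ha; apply/allP=> b /(allP Hv).
  case: a Ha => [i|i|] //=; case: b => [j|j|] //= *; rewrite /far; lia.
Qed.

Lemma comm_pr_r n u v r lo1 hi1 lo2 hi2 : 0 < lo1 -> hi1 < n -> hi2 < n -> hi1.+1 < lo2 ->
  all (pr lo1 hi1) u -> all (pr lo2 hi2) v -> ibeq n (u ++ v ++ r) (v ++ u ++ r).
Proof. by move=> *; rewrite !catA (@comm_pr n u v lo1 hi1 lo2 hi2). Qed.

Definition E p := locked (epsw p).
Lemma E_unlock p : E p = epsw p. Proof. by rewrite /E; unlock. Qed.

Lemma epswS p : 0 < p -> E p.+1 = ISi p :: E p ++ [:: IS p].
Proof.
rewrite !E_unlock.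
case: p => // p _.
have h : iota 1 p.+1 = iota 1 p ++ [:: p.+1] by rewrite -[p.+1]addn1 iotaD /= add1n addn1.
rewrite /epsw !succnK h rev_cat !map_cat /= -!catA /=.
done.
Qed.

Lemma E1 : E 1 = [:: IE]. Proof. by rewrite E_unlock. Qed.

Definition prE p (a : IBletter) := (a == IE) || pr 1 p.-1 a.

Lemma prE_E p : 0 < p -> all (prE p) (E p).
Proof.
elim: p => // p IH _.
case: p IH => [|p] IH; first by rewrite E1.
rewrite epswS //= all_cat /= andbT.
apply/and3P; split.
- by rewrite /prE /=; lia.
- apply/allP=> a /(allP (IH isT)); rewrite /prE; case: a => //= i; lia.
- by rewrite /prE /=; lia.
Qed.

Lemma valid_E n p : 0 < p <= n -> all (ivalid n) (E p).
Proof.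
case/andP=> h1 h2; apply/allP=> a /(allP (prE_E h1)); rewrite /prE.
case: a => //= [i|i|]; lia.
Qed.

Lemma comm_E n p v lo hi : 0 < p -> p < lo -> hi < n -> p <= n -> all (pr lo hi) v ->
  ibeq n (E p ++ v) (v ++ E p).
Proof.
move=> h1 h2 h3 h4 Hv; apply: wcomm.
- apply: valid_E; lia.
- apply/allP=> a /(allP Hv); case: a => //= i; lia.
- apply/allP=> a /(allP (prE_E h1)) Ha; apply/allP=> b /(allP Hv).
  case: a Ha => [i|i|] //=; rewrite /prE /=; case: b => [j|j|] //= *; rewrite /far; lia.
Qed.

Lemma comm_E_r n p v r lo hi : 0 < p -> p < lo -> hi < n -> p <= n -> all (pr lo hi) v ->
  ibeq n (E p ++ v ++ r) (v ++ E p ++ r).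
Proof. by move=> *; rewrite catA (@comm_E n p v lo hi) // -catA. Qed.

Lemma comm_E_IS n p j r : 0 < p -> p < j -> j < n -> ibeq n (E p ++ IS j :: r) (IS j :: E p ++ r).
Proof. by move=> *; apply: (@comm_E_r n p [:: IS j] r j j) => //=; lia. Qed.
Lemma comm_E_ISi n p j r : 0 < p -> p < j -> j < n -> ibeq n (E p ++ ISi j :: r) (ISi j :: E p ++ r).
Proof. by move=> *; apply: (@comm_E_r n p [:: ISi j] r j j) => //=; lia. Qed.


Definition Rp n p :=
 [/\ ibeq n (E p ++ [:: IS p] ++ [:: IS p]) (E p),
     ibeq n ([:: IS p] ++ [:: IS p] ++ E p) (E p),
     ibeq n (E p ++ [:: IS p] ++ E p ++ [:: IS p]) (E p ++ [:: IS p] ++ E p)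
   & ibeq n ([:: IS p] ++ E p ++ [:: IS p] ++ E p) (E p ++ [:: IS p] ++ E p)].

Lemma flip1 n p r : 0 < p < n -> ibeq n (E p ++ [:: IS p] ++ [:: IS p]) (E p) ->
  ibeq n (E p ++ IS p :: r) (E p ++ ISi p :: r).
Proof.
move=> hp H; symmetry.
transitivity ((E p ++ [:: IS p] ++ [:: IS p]) ++ ISi p :: r); first by rewrite H.
by rewrite -catA /= inv1.
Qed.

Lemma flip2 n p r : 0 < p < n -> ibeq n ([:: IS p] ++ [:: IS p] ++ E p) (E p) ->
  ibeq n (IS p :: E p ++ r) (ISi p :: E p ++ r).
Proof.
move=> hp H; symmetry.
transitivity (ISi p :: ([:: IS p] ++ [:: IS p] ++ E p) ++ r); first by rewrite H.
by rewrite /= inv2.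
Qed.

Lemma R_one n : 1 < n -> Rp n 1.
Proof.
move=> h; rewrite /Rp E1 /=; split.
- exact: rel_eq (ib_epssq1 h).
- exact: rel_eq (ib_epssq2 h).
- exact: rel_eq (ib_eps1 h).
- exact: rel_eq (ib_eps2 h).
Qed.

Lemma R_step n p : 0 < p -> p.+1 < n -> Rp n p -> Rp n p.+1.
Proof.
move=> h1 h2 [Ra Rb Rc Rd].
have hp : 0 < p < n by lia.
have hp1 : 0 < p.+1 < n by lia.
set z := [:: IS p; IS p.+1]; set zi := [:: ISi p.+1; ISi p].
have zz r : ibeq n (zi ++ z ++ r) r by rewrite /z /zi /= inv2 // inv2.
have Cm a b : ibeq n ((z ++ a ++ zi) ++ (z ++ b ++ zi)) (z ++ (a ++ b) ++ zi).
  by rewrite -!catA zz.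
have hE : ibeq n (E p.+1) (z ++ E p ++ zi).
  rewrite /z /zi /=.
  rewrite -comm_E_IS; try lia.
  rewrite inv1 // -(flip1 _ hp Ra) (flip2 _ hp Rb) epswS //.
have hS : ibeq n [:: IS p.+1] (z ++ [:: IS p] ++ zi).
  rewrite /z /zi /= braid_eq // inv1 // inv1 //.
split.
- by rewrite hE hS !Cm Ra.
- by rewrite hE hS !Cm Rb.
- by rewrite hE hS !Cm Rc.
- by rewrite hE hS !Cm Rd.
Qed.

Lemma R_all n p : 0 < p < n -> Rp n p.
Proof.
elim: p => // p IH /andP[h1 h2].
case: p IH h1 h2 => [|p] IH h1 h2; first exact: R_one.
apply: R_step => //; apply: IH; lia.
Qed.

Lemma flipL n p r : 0 < p < n -> ibeq n (E p ++ IS p :: r) (E p ++ ISi p :: r).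
Proof. by move=> hp; case: (R_all hp) => Ra *; apply: flip1. Qed.

Lemma flipR n p r : 0 < p < n -> ibeq n (IS p :: E p ++ r) (ISi p :: E p ++ r).
Proof. by move=> hp; case: (R_all hp) => _ Rb *; apply: flip2. Qed.

Lemma flipE n p r : 0 < p < n ->
  ibeq n (E p.+1 ++ r) (IS p :: E p ++ ISi p :: r).
Proof.
move=> hp; rewrite epswS; last by lia.
by rewrite /= -catA /= -(flipL _ hp) (flipR _ hp).
Qed.

Lemma E_idem n p : 0 < p <= n -> ibeq n (E p ++ E p) (E p).
Proof.
elim: p => // p IH /andP[h1 h2].
case: p IH h1 h2 => [|p] IH h1 h2.
  by rewrite E1; apply: rel_eq; apply: ib_epsidem.
rewrite epswS // /= -catA /= inv1; last by lia.
by rewrite catA IH //; lia.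
Qed.

Lemma lcomm_r n a b r : ivalid n a -> ivalid n b -> lc a b -> ibeq n (a :: b :: r) (b :: a :: r).
Proof. by move=> Ha Hb H; have := cat_mor (lc_comm Ha Hb H) (ibeq_refl n r). Qed.

Lemma sti n i r : 0 < i -> i.+1 < n ->
  ibeq n (IS i :: ISi i.+1 :: ISi i :: r) (ISi i.+1 :: ISi i :: IS i.+1 :: r).
Proof.
move=> h1 h2.
have hi : 0 < i < n by lia.
have hi1 : 0 < i.+1 < n by lia.
transitivity (ISi i.+1 :: ISi i :: IS i :: IS i.+1 :: IS i :: ISi i.+1 :: ISi i :: r).
  by symmetry; rewrite inv2 // inv2.
by rewrite braid_eq // inv1 // inv1.
Qed.

Lemma s_E n i p : 0 < i -> i.+2 <= p -> p <= n -> ibeq n (IS i :: E p) (E p ++ [:: IS i]).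
Proof.
move=> h0; elim: p => // p IH hip hpn.
have hp : 0 < p by lia.
case: (leqP i.+2 p) => h.
- rewrite epswS //= -catA /=.
  rewrite lcomm_r /=; try (rewrite /far; lia); try lia.
  have := cat_mor (IH h (ltnW hpn)) (ibeq_refl n [:: IS p]).
  rewrite /= -catA /= => ->.
  rewrite lcomm_r //=; try (rewrite /far; lia); lia.
- have ep : p = i.+1 by lia.
  rewrite ep epswS // epswS // /= -!catA /=.
  rewrite sti; try lia.
  rewrite -comm_E_IS; try lia.
  by rewrite -braid_eq //; lia.
Qed.

Lemma si_E n i p : 0 < i -> i.+2 <= p -> p <= n -> ibeq n (ISi i :: E p) (E p ++ [:: ISi i]).
Proof. move=> *; apply: conj_inv; try lia; exact: s_E. Qed.

Lemma IE_E n q : 0 < q <= n -> ibeq n (IE :: E q) (E q ++ [:: IE]).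
Proof.
elim: q => // q IH /andP[h1 h2].
case: q IH h1 h2 => [|q] IH h1 h2; first by rewrite E1.
case: q IH h1 h2 => [|q] IH h1 h2.
- have h : 0 < 1 < n by lia.
  rewrite epswS //= E1 /=.
  transitivity ([:: IE] ++ [:: IS 1] ++ [:: IE] ++ [:: IS 1]).
    by move: (flipL [:: IE; IS 1] h); rewrite E1 /= => ->.
  case: (R_all h); rewrite E1 => _ _ -> <-.
  by move: (flipR [:: IS 1; IE] h); rewrite E1 /= => ->.
- rewrite epswS //= -catA /=.
  rewrite lcomm_r //=; try lia.
  have := cat_mor (IH ltac:(lia)) (ibeq_refl n [:: IS q.+2]).
  rewrite /= -catA /= => ->.
  rewrite lcomm_r //=; lia.
Qed.

Definition sh k (w : seq IBletter) := flatten (map (shiftI k) w).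

Lemma sh_cat k u v : sh k (u ++ v) = sh k u ++ sh k v.
Proof. by rewrite /sh map_cat flatten_cat. Qed.

Lemma sh_cons k a v : sh k (a :: v) = shiftI k a ++ sh k v.
Proof. by []. Qed.

Lemma comm_shift k l a b : ivalid k a -> ivalid l b ->
  ibeq (k + l) (a :: shiftI k b) (shiftI k b ++ [:: a]).
Proof.
case: b => [j|j|] /= Ha Hb.
- apply: lc_comm; case: a Ha Hb => //= *; rewrite ?/far; lia.
- apply: lc_comm; case: a Ha Hb => //= *; rewrite ?/far; lia.
- rewrite -E_unlock; case: a Ha => [i|i|] /= Ha.
  + apply: s_E; lia.
  + apply: si_E; lia.
  + apply: IE_E; lia.
Qed.

Lemma comm_sh k l u v : all (ivalid k) u -> all (ivalid l) v ->
  ibeq (k + l) (u ++ sh k v) (sh k v ++ u).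
Proof.
move=> Hu Hv.
have H1 a : ivalid k a -> ibeq (k + l) (a :: sh k v) (sh k v ++ [:: a]).
  move=> Ha; elim: v Hv => [|b v IH] //= /andP[Hb Hv].
  rewrite -/(sh k v).
  have -> : a :: shiftI k b ++ sh k v = (a :: shiftI k b) ++ sh k v by [].
  by rewrite (comm_shift Ha Hb) -catA /= IH // catA.
elim: u Hu => [|a u IH] /=; first by rewrite cats0.
case/andP=> Ha Hu.
rewrite IH //.
have -> : a :: sh k v ++ u = (a :: sh k v) ++ u by [].
by rewrite (H1 a Ha) -catA.
Qed.

Lemma shiftIE k : shiftI k IE = E k.+1.
Proof. by rewrite E_unlock. Qed.

Lemma sh_rel k l x y : ibrel l x y -> ibeq (k + l) (sh k x) (sh k y).
Proof.
case.
- move=> i H; rewrite /sh /=; apply: rel_eq; apply: ib_inv1; lia.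
- move=> i H; rewrite /sh /=; apply: rel_eq; apply: ib_inv2; lia.
- move=> i j h1 h2 h3; rewrite /sh /=; apply: rel_eq; apply: ib_far; lia.
- move=> i h1 h2; rewrite /sh /= addSn; apply: rel_eq; apply: ib_braid; lia.
- move=> i H; rewrite /sh /= -E_unlock ?add1n ?cats0.
  rewrite comm_E_IS ?cats0 //; lia.
- move=> H; rewrite /sh /= -E_unlock ?add1n ?cats0; apply: E_idem; lia.
- move=> H; rewrite /sh /= -E_unlock ?add1n ?cats0.
  have hp : 0 < k.+1 < k + l by lia.
  by case: (R_all hp).
- move=> H; rewrite /sh /= -E_unlock ?add1n ?cats0.
  have hp : 0 < k.+1 < k + l by lia.
  by case: (R_all hp).
- move=> H; rewrite /sh /= -E_unlock ?add1n ?cats0.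
  have hp : 0 < k.+1 < k + l by lia.
  by case: (R_all hp).
- move=> H; rewrite /sh /= -E_unlock ?add1n ?cats0.
  have hp : 0 < k.+1 < k + l by lia.
  by case: (R_all hp).
Qed.

Lemma sh_eq k l x y : ibeq l x y -> ibeq (k + l) (sh k x) (sh k y).
Proof.
elim=> [u v a b H|w|w w' _ IH|w1 w2 w3 _ IH1 _ IH2].
- rewrite !sh_cat; apply: cat_mor => //; apply: cat_mor => //; exact: sh_rel.
- reflexivity.
- by symmetry.
- by rewrite IH1.
Qed.

Lemma ivalid_mono n n' a : n <= n' -> ivalid n a -> ivalid n' a.
Proof. case: a => //= *; lia. Qed.

Lemma all_valid_mono n n' w : n <= n' -> all (ivalid n) w -> all (ivalid n') w.
Proof. move=> le; elim: w => //= a w IH /andP[h1 h2]; by rewrite (ivalid_mono le h1) IH. Qed.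

Lemma valid_sh k l g : all (ivalid l) g -> all (ivalid (k + l)) (sh k g).
Proof.
elim: g => //= a g IH /andP[Ha Hg]; rewrite all_cat IH // andbT.
case: a Ha => //= [i|i|] Ha; try lia.
rewrite -E_unlock; apply: valid_E; lia.
Qed.

Lemma sh_E k l : sh k (E l.+1) = E (k + l).+1.
Proof.
elim: l => [|l IH]; first by rewrite E1 /sh /= cats0 addn0 E_unlock.
rewrite addnS [RHS]epswS ?addn_gt0 ?orbT // epswS // sh_cons sh_cat IH /=.
by rewrite /sh /= addSn addnC.
Qed.

Lemma sh_shift k l a : sh k (shiftI l a) = shiftI (k + l) a.
Proof.
case: a => [i|i|] /=.
- by rewrite /sh /= -addnA [l + k]addnC.
- by rewrite /sh /= -addnA [l + k]addnC.
- by rewrite -!E_unlock sh_E.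
Qed.

Lemma sh_sh k l h : sh k (sh l h) = sh (k + l) h.
Proof.
elim: h => //= a h IH.
by rewrite -/(sh l h) -/(sh (k + l) h) sh_cat IH sh_shift.
Qed.

Lemma sh0 w : sh 0 w = w.
Proof.
elim: w => //= a w IH; rewrite sh_cons IH.
by case: a => [i|i|] /=; rewrite ?addn0 // -E_unlock E1.
Qed.

Lemma muIE k l f g : muI k l f g = f ++ sh k g. Proof. by []. Qed.

Theorem part1 : IB_strict_monoidal.
Proof.
split.
- move=> k l f f' g g' _ _ _ _ Hf Hg; rewrite !muIE.
  apply: cat_mor; [apply: ibeq_mono Hf; exact: leq_addr | exact: sh_eq].
- move=> k l f g Hf Hg; rewrite muIE all_cat valid_sh // andbT.
  by apply: all_valid_mono Hf; rewrite leq_addr.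
- move=> k l f f' g g' Hf Hf' Hg Hg'; rewrite !muIE sh_cat -!catA.
  apply: cat_mor => //; rewrite !catA; apply: cat_mor => //.
  by rewrite comm_sh.
- move=> k l p f g h _ _ _; rewrite !muIE sh_cat sh_sh catA.
  reflexivity.
- move=> k f _; rewrite !muIE sh0 cats0; split; reflexivity.
Qed.

Definition dec o m := [seq IS (o.+1 + i) | i <- rev (iota 0 m)].
Fixpoint cc o m n := if n is n'.+1 then dec o m ++ cc o.+1 m n' else [::].

Lemma cc_S o m n : cc o m n.+1 = dec o m ++ cc o.+1 m n. Proof. by []. Qed.

Lemma flat_cc o m n : flatten [seq [seq IS (j + i) | i <- rev (iota 0 m)] | j <- iota o.+1 n] = cc o m n.
Proof. elim: n o => //= n IH o; by rewrite IH. Qed.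

Lemma cI_cc m n : cI m n = cc 0 m n.
Proof. exact: flat_cc. Qed.

Lemma dec0 o : dec o 0 = [::]. Proof. by []. Qed.

Lemma decS o m : dec o m.+1 = IS (o.+1 + m) :: dec o m.
Proof.
have h : iota 0 m.+1 = iota 0 m ++ [:: m] by rewrite -[m.+1]addn1 iotaD add0n.
by rewrite /dec h rev_cat.
Qed.

Lemma decS' o m : dec o m.+1 = dec o.+1 m ++ [:: IS o.+1].
Proof.
elim: m => [|m IH]; first by rewrite /dec /= addn0.
by rewrite decS IH decS addnS addSn.
Qed.

Lemma dec_split o m n : dec o (m + n) = dec (o + m) n ++ dec o m.
Proof.
elim: n => [|n IH]; first by rewrite addn0 dec0.
by rewrite addnS !decS IH /= addSn addnA.
Qed.

Lemma cc_add o m n p : cc o m (n + p) = cc o m n ++ cc (o + n) m p.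
Proof.
elim: n o => [|n IH] o /=; first by rewrite addn0.
by rewrite IH -catA addSnnS.
Qed.

Lemma sh_dec k o m : sh k (dec o m) = dec (o + k) m.
Proof.
elim: m => [|m IH] //; rewrite !decS sh_cons IH /=.
by congr (IS _ :: _); lia.
Qed.

Lemma sh_cc k o m n : sh k (cc o m n) = cc (o + k) m n.
Proof.
elim: n o => [|n IH] o //=; by rewrite sh_cat sh_dec IH addSn.
Qed.

Lemma pr_mono lo hi lo' hi' a : lo' <= lo -> hi <= hi' -> pr lo hi a -> pr lo' hi' a.
Proof. case: a => //= *; lia. Qed.

Lemma all_pr_mono lo hi lo' hi' w : lo' <= lo -> hi <= hi' -> all (pr lo hi) w -> all (pr lo' hi') w.
Proof. move=> h1 h2; elim: w => //= a w IH /andP[H1 H2]; by rewrite (pr_mono h1 h2 H1) IH. Qed.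

Lemma pr_dec o m : all (pr o.+1 (o + m)) (dec o m).
Proof.
elim: m => [|m IH]; first by [].
rewrite decS /= (all_pr_mono _ _ IH) //; lia.
Qed.

Lemma pr_cc o m n : all (pr o.+1 (o + m + n).-1) (cc o m n).
Proof.
elim: n o => [|n IH] o //=; rewrite all_cat.
case: m IH => [|m] IH; first by rewrite /= (all_pr_mono _ _ (IH o.+1)) //; lia.
rewrite (all_pr_mono _ _ (pr_dec o m.+1)) ?(all_pr_mono _ _ (IH o.+1)) //; lia.
Qed.

Lemma pr_valid n lo hi w : 0 < lo -> hi < n -> all (pr lo hi) w -> all (ivalid n) w.
Proof. move=> h1 h2; elim: w => //= a w IH /andP[H1 H2]; rewrite IH // andbT; case: a H1 => //= *; lia. Qed.

Lemma pushL n a w b r : ibeq n (a :: w) (w ++ b) -> ibeq n (a :: w ++ r) (w ++ b ++ r).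
Proof. move=> H; have := cat_mor H (ibeq_refl n r); by rewrite -catA. Qed.

Lemma pushLw n u w b r : ibeq n (u ++ w) (w ++ b) -> ibeq n (u ++ w ++ r) (w ++ b ++ r).
Proof. move=> H; have := cat_mor H (ibeq_refl n r); by rewrite -!catA. Qed.

Lemma dec_s N o m i : 0 < i < m -> o + m < N ->
  ibeq N (IS (o + i) :: dec o m) (dec o m ++ [:: IS (o + i).+1]).
Proof.
elim: m => [|m IH] h1 h2; first lia.
rewrite decS.
case: (ltnP i m) => h.
- rewrite lcomm_r /=; try (rewrite /far; lia); try lia.
  apply: cons_mor => //; apply: IH; lia.
- have em : i = m by lia.
  case: m IH h1 h2 h em => [|m'] IH h1 h2 h em; first by lia.
  rewrite decS em.
  have -> : o + m'.+1 = o.+1 + m' by lia.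
  have -> : o.+1 + m'.+1 = (o.+1 + m').+1 by lia.
  rewrite braid_eq; try lia.
  rewrite /=; apply: cons_mor => //; apply: cons_mor => //.
  symmetry; apply: (@comm_pr N (dec o m') [:: IS (o.+1 + m').+1] o.+1 (o + m') (o.+1 + m').+1 (o.+1 + m').+1);
    rewrite ?pr_dec //=; lia.
Qed.

Lemma pushL1 n a w c r : ibeq n (a :: w) (w ++ [:: c]) -> ibeq n (a :: w ++ r) (w ++ c :: r).
Proof. move=> H; have := cat_mor H (ibeq_refl n r); by rewrite -catA. Qed.

Lemma swapL N x w lo hi : 0 < x -> x < N -> hi < N -> x.+1 < lo -> all (pr lo hi) w ->
  ibeq N (IS x :: w) (w ++ [:: IS x]).
Proof. move=> *; apply: (@comm_pr N [:: IS x] w x x lo hi) => //=; lia. Qed.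

Lemma swapH N x w lo hi : 0 < lo -> x < N -> hi.+1 < x -> all (pr lo hi) w ->
  ibeq N (IS x :: w) (w ++ [:: IS x]).
Proof. move=> *; symmetry; apply: (@comm_pr N w [:: IS x] lo hi x x) => //=; lia. Qed.

Lemma cc_s N o m n i : 0 < i < m -> o + m + n <= N ->
  ibeq N (IS (o + i) :: cc o m n) (cc o m n ++ [:: IS (o + i + n)]).
Proof.
elim: n o => [|n IH] o h1 h2; first by rewrite addn0.
rewrite cc_S (pushL1 _ (dec_s h1 _)); last by lia.
rewrite -catA; apply: cat_mor => //.
have e1 : (o + i).+1 = o.+1 + i by lia.
have e2 : o + i + n.+1 = o.+1 + i + n by lia.
rewrite e1 e2; apply: IH => //; lia.
Qed.

Lemma E_dec N o m : 0 < m -> o + m < N -> ibeq N (E o.+1 ++ dec o m) (dec o m ++ E o.+2).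
Proof.
case: m => // m _ h.
rewrite decS' catA (@comm_E N o.+1 (dec o.+1 m) o.+2 (o.+1 + m)) ?pr_dec //; try lia.
rewrite -!catA; apply: cat_mor => //.
rewrite (@epswS o.+1) //= inv1 //; lia.
Qed.

Lemma E_cc N o m n : 0 < m -> o + m + n <= N ->
  ibeq N (E o.+1 ++ cc o m n) (cc o m n ++ E (o + n).+1).
Proof.
elim: n o => [|n IH] o h1 h2; first by rewrite cats0 addn0.
rewrite cc_S catA E_dec //; last by lia.
rewrite -!catA; apply: cat_mor => //.
have e : o + n.+1 = o.+1 + n by lia.
rewrite e; apply: IH => //; lia.
Qed.

Lemma two_block N o m : o + m + 1 < N ->
  ibeq N (IS (o + m).+1 :: dec o m ++ dec o.+1 m) ((dec o m ++ dec o.+1 m) ++ [:: IS o.+1]).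
Proof.
elim: m => [|m IH] h; first by rewrite addn0.
rewrite !decS.
have e1 : (o + m.+1).+1 = (o.+1 + m).+1 by lia.
have e2 : o.+2 + m = (o.+1 + m).+1 by lia.
rewrite e1 e2 /=.
have sw : forall r, ibeq N (IS (o.+1 + m).+1 :: dec o m ++ r) (dec o m ++ IS (o.+1 + m).+1 :: r).
  move=> r; apply: pushL1; apply: (@swapH N _ _ o.+1 (o + m)); rewrite ?pr_dec //; lia.
rewrite -sw -braid_eq; try lia.
have e3 : o.+1 + m = (o + m).+1 by lia.
have IH' : ibeq N (IS (o.+1 + m) :: dec o m ++ dec o.+1 m) ((dec o m ++ dec o.+1 m) ++ [:: IS o.+1]).
  by rewrite e3; apply: IH; lia.
by apply: cons_mor => //; rewrite IH'.
Qed.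

Lemma cc_s2 N o m n j : 0 < j < n -> o + m + n <= N ->
  ibeq N (IS (o + j + m) :: cc o m n) (cc o m n ++ [:: IS (o + j)]).
Proof.
elim: n o j => [|n IH] o j h1 h2; first by lia.
rewrite cc_S.
case: (ltnP 1 j) => hj.
- rewrite (pushL1 _ (@swapH N _ _ o.+1 (o + m) _ _ _ (pr_dec o m))); try lia.
  rewrite -catA; apply: cat_mor => //.
  have e1 : o + j + m = o.+1 + j.-1 + m by lia.
  have e2 : o + j = o.+1 + j.-1 by lia.
  rewrite e1 e2; apply: IH; lia.
- have ej : j = 1 by lia.
  case: n IH h1 h2 => [|n] IH h1 h2; first by lia.
  rewrite cc_S ej.
  have e1 : o + 1 + m = (o + m).+1 by lia.
  rewrite e1 catA (pushL1 _ (two_block _)); last by lia.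
  rewrite -!catA; apply: cat_mor => //; apply: cat_mor => //.
  rewrite addn1; apply: (@swapL N _ _ o.+3 (o.+2 + m + n).-1); rewrite ?pr_cc //; lia.
Qed.

Lemma E_dec2 N o m : o + m < N -> ibeq N (E (o + m).+1 ++ dec o m) (dec o m ++ E o.+1).
Proof.
elim: m => [|m IH] h; first by rewrite addn0 cats0.
rewrite decS.
have e : (o + m.+1) = o.+1 + m by lia.
rewrite e flipE; last by lia.
rewrite inv2; last by lia.
apply: cons_mor => //.
have e2 : o.+1 + m = (o + m).+1 by lia.
rewrite e2 IH //; lia.
Qed.

Lemma E_cc2 N o m n : 0 < n -> o + m + n <= N ->
  ibeq N (E (o + m).+1 ++ cc o m n) (cc o m n ++ E o.+1).
Proof.
case: n => // n _ h.
rewrite cc_S catA E_dec2; last by lia.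
rewrite -!catA; apply: cat_mor => //.
apply: (@comm_E N o.+1 (cc o.+1 m n) o.+2 (o.+1 + m + n).-1); rewrite ?pr_cc //; lia.
Qed.

Definition invl a := match a with IS i => ISi i | ISi i => IS i | IE => IE end.
Definition invw w := rev (map invl w).

Lemma invw_cons a w : invw (a :: w) = invw w ++ [:: invl a].
Proof. by rewrite /invw /= rev_cons cats1. Qed.

Lemma inv_ok n w : all (pr 1 n.-1) w -> ibeq n (w ++ invw w) [::] /\ ibeq n (invw w ++ w) [::].
Proof.
elim: w => [|a w IH] /=; first by [].
case/andP=> Ha Hw; case: (IH Hw) => H1 H2.
rewrite invw_cons; split.
- rewrite catA H1 /=; case: a Ha => //= i Hi; [rewrite inv1 | rewrite inv2] => //; lia.
- rewrite -catA /=.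
  case: a Ha => //= i Hi; [rewrite inv2 | rewrite inv1] => //; lia.
Qed.

Lemma N1l m n a : ivalid m a -> ibeq (m + n) (a :: cc 0 m n) (cc 0 m n ++ shiftI n a).
Proof.
case: a => [i|i|] /= Ha.
- have := @cc_s (m + n) 0 m n i Ha; rewrite !add0n; apply; lia.
- apply: conj_inv; try lia.
  have := @cc_s (m + n) 0 m n i Ha; rewrite !add0n; apply; lia.
- rewrite -E_unlock add1n.
  have := @E_cc (m + n) 0 m n Ha; rewrite E1 add0n; apply; lia.
Qed.

Lemma N2l m n b : ivalid n b -> ibeq (m + n) (shiftI m b ++ cc 0 m n) (cc 0 m n ++ [:: b]).
Proof.
case: b => [j|j|] /= Hb.
- have := @cc_s2 (m + n) 0 m n j Hb; rewrite !add0n; apply; lia.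
- apply: conj_inv; try lia.
  have := @cc_s2 (m + n) 0 m n j Hb; rewrite !add0n; apply; lia.
- rewrite -E_unlock add1n.
  have := @E_cc2 (m + n) 0 m n Hb; rewrite E1 add0n; apply; lia.
Qed.

Lemma N1w m n f : all (ivalid m) f -> ibeq (m + n) (f ++ cc 0 m n) (cc 0 m n ++ sh n f).
Proof.
elim: f => [|a f IH] /=; first by rewrite cats0.
case/andP=> Ha Hf; rewrite IH //.
rewrite -[a :: _ ++ _]/((a :: cc 0 m n) ++ sh n f) N1l // -catA //.
Qed.

Lemma N2w m n g : all (ivalid n) g -> ibeq (m + n) (sh m g ++ cc 0 m n) (cc 0 m n ++ g).
Proof.
elim: g => [|b g IH] /=; first by rewrite cats0.
case/andP=> Hb Hg; rewrite sh_cons -catA IH // catA N2l // -catA //.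
Qed.

Lemma pr_cI m n : all (pr 1 (m + n).-1) (cI m n).
Proof. by rewrite cI_cc; have := pr_cc 0 m n; rewrite add0n. Qed.

Lemma pr_valid1 N w : all (pr 1 N.-1) w -> all (ivalid N) w.
Proof. elim: w => //= a w IH /andP[h1 h2]; rewrite IH // andbT; case: a h1 => //= *; lia. Qed.

Lemma hex2 N o m n p : o + m + n + p <= N ->
  ibeq N (cc o (m + n) p) (cc (o + m) n p ++ cc o m p).
Proof.
elim: p o => [|p IH] o h; first by [].
rewrite !cc_S dec_split -!catA (IH o.+1); last by lia.
apply: cat_mor => //.
have e : o.+1 + m = (o + m).+1 by lia.
rewrite e catA (@comm_pr N (dec o m) (cc (o + m).+1 n p) o.+1 (o + m) (o + m).+2 ((o + m).+1 + n + p).-1);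
  rewrite ?pr_dec ?pr_cc -?catA //; lia.
Qed.

Theorem part2 : IB_braiding.
Proof.
split.
- move=> m n; apply: pr_valid1; exact: pr_cI.
- move=> m n; exists (invw (cI m n)); split; last exact: inv_ok (pr_cI m n).
  apply: pr_valid1; rewrite /invw all_rev all_map.
  apply: sub_all (pr_cI m n); by case.
- move=> m n f g Hf Hg; rewrite !cI_cc !muIE -catA N2w // catA N1w // -catA.
  apply: cat_mor => //; have := comm_sh Hg Hf; rewrite addnC => ->; reflexivity.
- move=> m n p; rewrite !cI_cc !muIE !cats0 /= sh_cc add0n cc_add; reflexivity.
- move=> m n p; rewrite !cI_cc !muIE !cats0 /= sh_cc add0n.
  have := @hex2 (m + n + p) 0 m n p; rewrite !add0n; apply; lia.
Qed.

Lemma kappa_cat w w' : kappa (w ++ w') = kappa w ++ kappa w'.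
Proof. exact: map_cat. Qed.

Lemma kappa_rel n x y : brel n x y -> ibrel n (kappa x) (kappa y).
Proof.
case.
- move=> i H; exact: ib_inv1.
- move=> i H; exact: ib_inv2.
- move=> i j h1 h2 h3; exact: ib_far.
- move=> i h1 h2; exact: ib_braid.
Qed.

Lemma sh_kappa k g : sh k (kappa g) = kappa (map (shiftB k) g).
Proof. elim: g => //= a g IH; rewrite sh_cons IH; by case: a. Qed.

Theorem part3 : K_braided_functor.
Proof.
split.
- move=> n; elim=> //= a w IH /andP[h1 h2]; rewrite IH // andbT; by case: a h1.
- move=> n w w' _ _; elim=> [u v x y H|w0|w0 w1 _ IH|w1 w2 w3 _ IH1 _ IH2].
  + rewrite !kappa_cat; apply: ibeq_step; exact: kappa_rel.
  + reflexivity.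
  + by symmetry.
  + by rewrite IH1.
- split => //; exact: kappa_cat.
- move=> k l f g _ _; rewrite /muB muIE kappa_cat sh_kappa; reflexivity.
- move=> m n; rewrite /kappa /cB /cI map_flatten -map_comp.
  have -> : [seq (map kappa_letter \o (fun j => [seq BS (j + i) | i <- rev (iota 0 m)])) j | j <- iota 1 n] =
            [seq [seq IS (j + i) | i <- rev (iota 0 m)] | j <- iota 1 n].
    by apply: eq_map => j /=; rewrite -map_comp.
  reflexivity.
Qed.

Theorem mainTheorem11 :
  IB_strict_monoidal /\ IB_braiding /\ K_braided_functor.
Proof. split; [exact: part1 | split; [exact: part2 | exact: part3]]. Qed.
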